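(* Let $\Gamma,\Delta$ be finite multisets of formulas with $\vdash_{\mathsf{GT}}\Gamma\Rightarrow\Delta$. Then for every pair of partitions $\Gamma=\Gamma_1,\Gamma_2$ and $\Delta=\Lambda_1,\Delta_2$ (as multiset unions) such that $\Lambda_1$ consists of classical formulas, there is a sequent interpolant $\phi$ of the partition sequent $\Gamma_1;\Gamma_2\Rightarrow\Lambda_1;\Delta_2$; moreover, if $\Delta_2$ consists of classical formulas, then $\phi$ can be taken to be classical.
   Context: Fix a countably infinite set $\mathsf{Prop}$ of propositional variables. Classical formulas are generated by $\alpha ::= p \mid \bot \mid \neg\alpha \mid \alpha\wedge\alpha \mid \alpha\vee\alpha$ with $p\in\mathsf{Prop}$. Formulas are generated by $\phi ::= \alpha \mid \phi\wedge\phi \mid \phi\vee\phi \mid \phi\mathbin{\backslash\!\!/}\phi$ where $\alpha$ is classical ($\vee$: split disjunction, $\mathbin{\backslash\!\!/}$: inquisitive disjunction). A sequent is $\Gamma\Rightarrow\Delta$ with $\Gamma,\Delta$ finite multisets of formulas; ''$\Gamma,\Delta$'' is multiset union. Polarity: an occurrence of a propositional variable in $\phi$ is positive (negative) if it lies in the scope of an even (odd) number of negations. $\mathsf{P}^+(\phi)$ ($\mathsf{P}^-(\phi)$) is the set of variables having a positive (negative) occurrence in $\phi$, and $\mathsf{P}^i(\Gamma)=\bigcup_{\phi\in\Gamma}\mathsf{P}^i(\phi)$. A partition sequent $\Gamma_1;\Gamma_2\Rightarrow\Delta_1;\Delta_2$ is an expression such that $\Gamma_1,\Gamma_2\Rightarrow\Delta_1,\Delta_2$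 is a sequent. A formula $\phi$ is a sequent interpolant of it if (i) $\vdash_{\mathsf{GT}^-}\Gamma_1\Rightarrow\Delta_1,\phi$ and $\vdash_{\mathsf{GT}^-}\Gamma_2,\phi\Rightarrow\Delta_2$; and (ii) $\mathsf{P}^i(\phi)\subseteq(\mathsf{P}^i(\Gamma_1)\cup\mathsf{P}^j(\Delta_1))\cap(\mathsf{P}^j(\Gamma_2)\cup\mathsf{P}^i(\Delta_2))$ for $i\in\{+,-\}$ and $j$ the other element of $\{+,-\}$. Deep-inference notation: for a formula $\chi$ with a designated occurrence of a subformula not in the scope of any negation, $\chi\{\eta\}$ denotes the result of replacing that occurrence by $\eta$. The calculus $\mathsf{GT}$ ($\alpha$ ranges over classical formulas, $\Lambda$ over multisets of classical formulas): axioms $\Gamma,p\Rightarrow p,\Delta$ and $\Gamma,\bot\Rightarrow\Delta$; (L$\neg$) from $\Gamma\Rightarrow\alpha,\Delta$ infer $\Gamma,\neg\alpha\Rightarrow\Delta$; (R$\neg$) from $\Gamma,\alpha\Rightarrow\Delta$ infer $\Gamma\Rightarrow\neg\alpha,\Delta$; (L$\wedge$) from $\Gamma,\phi,\psi\Rightarrow\Delta$ infer $\Gamma,\phi\wedge\psi\Rightarrow\Delta$; (R$\wedge$) from $\Gamma\Rightarrow\phi,\Lambda$ and $\Gamma\Rightarrow\psi,\Lambda$ infer $\Gamma\Rightarrow\phi\wedge\psi,\Lambda,\Delta$; (L$\vee$) from $\Gamma,\phi\Rightarrow\Lambda$ and $\Gamma,\psi\Rightarrow\Lambda$ infer $\Gamma,\phi\vee\psi\Rightarrow\Lambda,\Delta$;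 (R$\vee$) from $\Gamma\Rightarrow\phi,\psi,\Delta$ infer $\Gamma\Rightarrow\phi\vee\psi,\Delta$; (L$\mathbin{\backslash\!\!/}$) from $\Gamma,\chi\{\phi_L\}\Rightarrow\Delta$ and $\Gamma,\chi\{\phi_R\}\Rightarrow\Delta$ infer $\Gamma,\chi\{\phi_L\mathbin{\backslash\!\!/}\phi_R\}\Rightarrow\Delta$; (R$\mathbin{\backslash\!\!/}$) from $\Gamma\Rightarrow\chi\{\phi_i\},\Delta$ ($i\in\{L,R\}$) infer $\Gamma\Rightarrow\chi\{\phi_L\mathbin{\backslash\!\!/}\phi_R\},\Delta$; (Cut) from $\Gamma\Rightarrow\phi,\Delta$ and $\Pi,\phi\Rightarrow\Sigma$ infer $\Pi,\Gamma\Rightarrow\Delta,\Sigma$. $\mathsf{GT}^-$ is $\mathsf{GT}$ without (Cut). *)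

(* Defs.v *)
(* lists up to Permutation model finite multisets. *)
From Stdlib Require Import List Permutation Bool.
Import ListNotations.

Inductive form : Type :=
| Var  : nat -> form
| Bot  : form
| Neg  : form -> form
| And  : form -> form -> form
| Or   : form -> form -> form            (* split disjunction *)
| Idis : form -> form -> form.           (* inquisitive disjunction *)

Fixpoint classical (f : form) : bool :=
  match f with
  | Var _ | Bot => true
  | Neg a => classical a
  | And a b | Or a b => classical a && classical b
  | Idis _ _ => false
  end.

Fixpoint wf (f : form) : bool :=
  match f with
  | Var _ | Bot => true
  | Neg a => classical a
  | And a b | Or a b | Idis a b => wf a && wf b
  end.

(* contexts chi{ } with a hole not in the scope of any negation *)
Inductive ctx : Type :=
| Hole  : ctx
| CAndL : ctx -> form -> ctx
| CAndR : form -> ctx -> ctx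
| COrL  : ctx -> form -> ctx
| COrR  : form -> ctx -> ctx
| CIdisL : ctx -> form -> ctx
| CIdisR : form -> ctx -> ctx.

Fixpoint plug (c : ctx) (e : form) : form :=
  match c with
  | Hole => e
  | CAndL c' b => And (plug c' e) b
  | CAndR a c' => And a (plug c' e)
  | COrL c' b => Or (plug c' e) b
  | COrR a c' => Or a (plug c' e)
  | CIdisL c' b => Idis (plug c' e) b
  | CIdisR a c' => Idis a (plug c' e)
  end.

Definition all_classical (L : list form) : Prop := Forall (fun f => classical f = true) L.

(* Derivability in GT (cut = true) and GT^- (cut = false).
   Sequents are pairs of lists; the Perm rule makes them multisets. *)
Inductive GT (cut : bool) : list form -> list form -> Prop :=
| GT_perm : forall G G' D D', Permutation G G' -> Permutation D D' ->
    GT cut G D -> GT cut G' D'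
| GT_ax : forall G D p, GT cut (Var p :: G) (Var p :: D)
| GT_bot : forall G D, GT cut (Bot :: G) D
| GT_Lneg : forall G D a, classical a = true ->
    GT cut G (a :: D) -> GT cut (Neg a :: G) D
| GT_Rneg : forall G D a, classical a = true ->
    GT cut (a :: G) D -> GT cut G (Neg a :: D)
| GT_Land : forall G D f g,
    GT cut (f :: g :: G) D -> GT cut (And f g :: G) D
| GT_Rand : forall G L D f g, all_classical L ->
    GT cut G (f :: L) -> GT cut G (g :: L) -> GT cut G (And f g :: L ++ D)
| GT_Lor : forall G L D f g, all_classical L ->
    GT cut (f :: G) L -> GT cut (g :: G) L -> GT cut (Or f g :: G) (L ++ D)
| GT_Ror : forall G D f g,
    GT cut G (f :: g :: D) -> GT cut G (Or f g :: D)
| GT_Lidis : forall G D c fL fR,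
    GT cut (plug c fL :: G) D -> GT cut (plug c fR :: G) D ->
    GT cut (plug c (Idis fL fR) :: G) D
| GT_RidisL : forall G D c fL fR,
    GT cut G (plug c fL :: D) -> GT cut G (plug c (Idis fL fR) :: D)
| GT_RidisR : forall G D c fL fR,
    GT cut G (plug c fR :: D) -> GT cut G (plug c (Idis fL fR) :: D)
| GT_cut : forall G D P S f, cut = true -> wf f = true ->
    GT cut G (f :: D) -> GT cut (f :: P) S -> GT cut (P ++ G) (D ++ S).

(* pvar s f p : variable p has an occurrence in f of polarity s
   (s = true: positive, i.e. under an even number of negations). *)
Fixpoint pvar (s : bool) (f : form) (p : nat) : Prop :=
  match f with
  | Var q => s = true /\ p = q
  | Bot => False
  | Neg a => pvar (negb s) a p
  | And a b | Or a b | Idis a b => pvar s a p \/ pvar s b p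
  end.

Definition pvarL (s : bool) (G : list form) (p : nat) : Prop :=
  exists f, In f G /\ pvar s f p.

Definition interpolant (G1 G2 D1 D2 : list form) (phi : form) : Prop :=
  wf phi = true /\
  GT false G1 (phi :: D1) /\ GT false (phi :: G2) D2 /\
  (forall (s : bool) (p : nat), pvar s phi p ->
     (pvarL s G1 p \/ pvarL (negb s) D1 p) /\
     (pvarL (negb s) G2 p \/ pvarL s D2 p)).

(* Main.v *)
Require Import Defs.
From Stdlib Require Import List Permutation Bool Classical Lia PeanoNat.
Import ListNotations.

Fixpoint res (f : form) : list form :=
  match f with
  | Var p => [Var p]
  | Bot => [Bot]
  | Neg a => [Neg a]
  | And a b => flat_map (fun x => map (fun y => And x y) (res b)) (res a)
  | Or a b => flat_map (fun x => map (fun y => Or x y) (res b)) (res a)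
  | Idis a b => res a ++ res b
  end.

Fixpoint ev (v : nat -> bool) (f : form) : bool :=
  match f with
  | Var p => v p
  | Bot => false
  | Neg a => negb (ev v a)
  | And a b => ev v a && ev v b
  | Or a b | Idis a b => ev v a || ev v b
  end.

Notation resL G RG := (Forall2 (fun f r => In r (res f)) G RG).

Definition valid (G D : list form) : Prop :=
  forall RG, resL G RG -> exists RD, resL D RD /\
    forall v, (forall x, In x RG -> ev v x = true) -> exists y, In y RD /\ ev v y = true.

Lemma in_res_And a b r : In r (res (And a b)) <-> exists x y, r = And x y /\ In x (res a) /\ In y (res b).
Proof.
  simpl. rewrite in_flat_map. split.
  - intros [x [Hx Hy]]. apply in_map_iff in Hy. destruct Hy as [y [<- Hy]]. eauto.
  - intros [x [y [-> [Hx Hy]]]]. exists x. split; auto. apply in_map_iff. eauto.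
Qed.

Lemma in_res_Or a b r : In r (res (Or a b)) <-> exists x y, r = Or x y /\ In x (res a) /\ In y (res b).
Proof.
  simpl. rewrite in_flat_map. split.
  - intros [x [Hx Hy]]. apply in_map_iff in Hy. destruct Hy as [y [<- Hy]]. eauto.
  - intros [x [y [-> [Hx Hy]]]]. exists x. split; auto. apply in_map_iff. eauto.
Qed.

Lemma res_classical f : classical f = true -> res f = [f].
Proof.
  induction f; simpl; intros H; auto; try discriminate;
  apply andb_true_iff in H; destruct H as [H1 H2];
  rewrite IHf1, IHf2 by auto; reflexivity.
Qed.

Lemma res_ex f : exists r, In r (res f).
Proof.
  induction f; simpl; eauto.
  - destruct IHf1 as [x Hx], IHf2 as [y Hy]. exists (And x y). apply in_res_And. eauto.
  - destruct IHf1 as [x Hx], IHf2 as [y Hy]. exists (Or x y). apply in_res_Or. eauto.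
  - destruct IHf1 as [x Hx]. exists x. apply in_or_app; auto.
Qed.

Lemma resL_ex D : exists RD, resL D RD.
Proof.
  induction D as [|f D [RD H]].
  - exists []. constructor.
  - destruct (res_ex f) as [r Hr]. exists (r :: RD). constructor; auto.
Qed.

Lemma resL_classical L RL : all_classical L -> resL L RL -> RL = L.
Proof.
  intros HL H. induction H as [|f r L RL Hf HR IH]; auto. inversion HL; subst.
  rewrite res_classical in Hf by auto. destruct Hf as [<-|[]]. f_equal; auto.
Qed.

Lemma resL_self L : all_classical L -> resL L L.
Proof.
  induction 1; constructor; auto. rewrite res_classical by auto. left; auto.
Qed.

Lemma resL_perm G G' RG : Permutation G G' -> resL G RG ->
  exists RG', resL G' RG' /\ Permutation RG RG'.
Proof.
  intros HP. revert RG. induction HP; intros RG H.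
  - inversion H; subst. exists []. split; constructor.
  - inversion H as [|a b c d Ha Hb]; subst. destruct (IHHP _ Hb) as [R' [K1 K2]].
    exists (b :: R'). split; constructor; auto.
  - inversion H as [|a b c d Ha Hb]; subst. inversion Hb as [|a' b' c' d' Ha' Hb']; subst.
    exists (b' :: b :: d'). split. repeat constructor; auto. constructor.
  - destruct (IHHP1 _ H) as [R1 [K1 K2]]. destruct (IHHP2 _ K1) as [R2 [K3 K4]].
    exists R2. split; auto. eapply perm_trans; eauto.
Qed.

Lemma valid_perm G D G' D' : valid G D -> Permutation G G' -> Permutation D D' -> valid G' D'.
Proof.
  intros HV HG HD RG' HR.
  destruct (resL_perm _ _ _ (Permutation_sym HG) HR) as [RG [H1 H2]].
  destruct (HV _ H1) as [RD [H3 H4]].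
  destruct (resL_perm _ _ _ HD H3) as [RD' [H5 H6]].
  exists RD'. split; auto. intros v Hv.
  destruct (H4 v) as [y [Hy1 Hy2]].
  - intros x Hx. apply Hv. eapply Permutation_in; [apply Permutation_sym|]; eauto.
  - exists y. split; auto. eapply Permutation_in; eauto.
Qed.

Lemma resL_app_inv G1 G2 R : resL (G1 ++ G2) R ->
  exists R1 R2, R = R1 ++ R2 /\ resL G1 R1 /\ resL G2 R2.
Proof. intros H. apply Forall2_app_inv_l in H. destruct H as [R1 [R2 [H1 [H2 ->]]]]. eauto. Qed.

Lemma resL_app G1 G2 R1 R2 : resL G1 R1 -> resL G2 R2 -> resL (G1 ++ G2) (R1 ++ R2).
Proof. intros; apply Forall2_app; auto. Qed.

Lemma res_plug_mono c X Y : (forall r, In r (res X) -> In r (res Y)) ->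
  forall r, In r (res (plug c X)) -> In r (res (plug c Y)).
Proof.
  intros H. induction c; simpl plug; intros r Hr; auto.
  - apply in_res_And in Hr. destruct Hr as [x [y [-> [H1 H2]]]]. apply in_res_And; eauto 10.
  - apply in_res_And in Hr. destruct Hr as [x [y [-> [H1 H2]]]]. apply in_res_And; eauto 10.
  - apply in_res_Or in Hr. destruct Hr as [x [y [-> [H1 H2]]]]. apply in_res_Or; eauto 10.
  - apply in_res_Or in Hr. destruct Hr as [x [y [-> [H1 H2]]]]. apply in_res_Or; eauto 10.
  - simpl in *. apply in_app_or in Hr. apply in_or_app. destruct Hr; auto.
  - simpl in *. apply in_app_or in Hr. apply in_or_app. destruct Hr; auto.
Qed.

Lemma res_plug_split c X Y Z : (forall r, In r (res X) -> In r (res Y) \/ In r (res Z)) ->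
  forall r, In r (res (plug c X)) -> In r (res (plug c Y)) \/ In r (res (plug c Z)).
Proof.
  intros H. induction c; simpl plug; intros r Hr; auto.
  - apply in_res_And in Hr. destruct Hr as [x [y [-> [H1 H2]]]].
    destruct (IHc _ H1); [left|right]; apply in_res_And; eauto 10.
  - apply in_res_And in Hr. destruct Hr as [x [y [-> [H1 H2]]]].
    destruct (IHc _ H2); [left|right]; apply in_res_And; eauto 10.
  - apply in_res_Or in Hr. destruct Hr as [x [y [-> [H1 H2]]]].
    destruct (IHc _ H1); [left|right]; apply in_res_Or; eauto 10.
  - apply in_res_Or in Hr. destruct Hr as [x [y [-> [H1 H2]]]].
    destruct (IHc _ H2); [left|right]; apply in_res_Or; eauto 10.
  - simpl in *. apply in_app_or in Hr. destruct Hr as [Hr|Hr].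
    + destruct (IHc _ Hr); [left|right]; apply in_or_app; auto.
    + left. apply in_or_app; auto.
  - simpl in *. apply in_app_or in Hr. destruct Hr as [Hr|Hr].
    + left; apply in_or_app; auto.
    + destruct (IHc _ Hr); [left|right]; apply in_or_app; auto.
Qed.

Lemma sound b G D : GT b G D -> valid G D.
Proof.
  induction 1.
  - eapply valid_perm; eauto.
  - intros RG HR. inversion HR as [|a r cc RG0 Ha Hb]; subst.
    simpl in Ha. destruct Ha as [<-|[]].
    destruct (resL_ex D) as [RD HD]. exists (Var p :: RD). split.
    + constructor; simpl; auto.
    + intros v Hv. exists (Var p). split. simpl; auto. apply Hv. simpl; auto.
  - intros RG HR. inversion HR as [|a r cc RG0 Ha Hb]; subst.
    simpl in Ha. destruct Ha as [<-|[]].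
    destruct (resL_ex D) as [RD HD]. exists RD. split; auto.
    intros v Hv. specialize (Hv Bot (or_introl eq_refl)). discriminate.
  - intros RG HR. inversion HR as [|x r cc RG0 Ha Hb]; subst.
    simpl in Ha. destruct Ha as [<-|[]].
    destruct (IHGT _ Hb) as [RD [HD Hv]].
    inversion HD as [|x a' cc RD0 Ha' Hb']; subst.
    rewrite res_classical in Ha' by auto. destruct Ha' as [<-|[]].
    exists RD0. split; auto. intros v Hv'.
    destruct (Hv v) as [y [Hy1 Hy2]]. { intros; apply Hv'; simpl; auto. }
    destruct Hy1 as [Hy1|Hy1]; [|eauto]. subst y.
    specialize (Hv' (Neg a) (or_introl eq_refl)). simpl in Hv'. rewrite Hy2 in Hv'. discriminate.
  - intros RG HR. destruct (IHGT (a :: RG)) as [RD [HD Hv]].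
    { constructor; auto. rewrite res_classical by auto. simpl; auto. }
    exists (Neg a :: RD). split. { constructor; simpl; auto. }
    intros v Hv'. destruct (ev v a) eqn:E.
    + destruct (Hv v) as [y [Hy1 Hy2]]. { intros x [<-|Hx]; auto. }
      exists y; simpl; auto.
    + exists (Neg a). simpl. rewrite E. auto.
  - intros RG HR. inversion HR as [|x r cc RG0 Ha Hb]; subst.
    apply in_res_And in Ha. destruct Ha as [x [y [-> [K1 K2]]]].
    destruct (IHGT (x :: y :: RG0)) as [RD [HD Hv]]. { repeat constructor; auto. }
    exists RD. split; auto. intros v Hv'. apply Hv.
    assert (E := Hv' _ (or_introl eq_refl)). simpl in E. apply andb_true_iff in E.
    intros z [<-|[<-|Hz]]; try tauto. apply Hv'. simpl; auto.
  - intros RG HR. destruct (IHGT1 _ HR) as [RD1 [HD1 Hv1]]. destruct (IHGT2 _ HR) as [RD2 [HD2 Hv2]].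
    inversion HD1 as [|x f' cc RL1 Ha1 Hb1]; subst.
    inversion HD2 as [|x g' cc RL2 Ha2 Hb2]; subst.
    apply resL_classical in Hb1; auto. apply resL_classical in Hb2; auto. subst.
    destruct (resL_ex D) as [RD HD]. exists (And f' g' :: L ++ RD). split.
    + constructor. apply in_res_And; eauto. apply resL_app; auto. apply resL_self; auto.
    + intros v Hv. destruct (Hv1 v Hv) as [y1 [[<-|Hy1] E1]].
      * destruct (Hv2 v Hv) as [y2 [[<-|Hy2] E2]].
        -- exists (And f' g'). simpl. rewrite E1, E2. auto.
        -- exists y2. split; auto. right. apply in_or_app; auto.
      * exists y1. split; auto. right. apply in_or_app; auto.
  - intros RG HR. inversion HR as [|x r cc RG0 Ha Hb]; subst.
    apply in_res_Or in Ha. destruct Ha as [x [y [-> [K1 K2]]]].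
    destruct (IHGT1 (x :: RG0)) as [RD1 [HD1 Hv1]]. { constructor; auto. }
    destruct (IHGT2 (y :: RG0)) as [RD2 [HD2 Hv2]]. { constructor; auto. }
    apply resL_classical in HD1; auto. apply resL_classical in HD2; auto. subst.
    destruct (resL_ex D) as [RD HD]. exists (L ++ RD). split.
    + apply resL_app; auto. apply resL_self; auto.
    + intros v Hv. assert (E := Hv _ (or_introl eq_refl)). simpl in E.
      apply orb_true_iff in E. destruct E as [E|E].
      * destruct (Hv1 v) as [z [Hz Ez]]. { intros w [<-|Hw]; auto. apply Hv; simpl; auto. }
        exists z. split; auto. apply in_or_app; auto.
      * destruct (Hv2 v) as [z [Hz Ez]]. { intros w [<-|Hw]; auto. apply Hv; simpl; auto. }
        exists z. split; auto. apply in_or_app; auto.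
  - intros RG HR. destruct (IHGT _ HR) as [RD [HD Hv]].
    inversion HD as [|x f' cc RD0 Ha Hb]; subst.
    inversion Hb as [|x g' cc RD1 Ha' Hb']; subst.
    exists (Or f' g' :: RD1). split.
    + constructor; auto. apply in_res_Or; eauto.
    + intros v Hv'. destruct (Hv v Hv') as [y [[<-|[<-|Hy]] E]].
      * exists (Or f' g'). simpl. rewrite E. auto.
      * exists (Or f' g'). simpl. rewrite E, orb_true_r. auto.
      * exists y. simpl. auto.
  - intros RG HR. inversion HR as [|x r cc RG0 Ha Hb]; subst.
    assert (K : In r (res (plug c fL)) \/ In r (res (plug c fR))).
    { refine (res_plug_split c (Idis fL fR) _ _ _ r Ha). intros z Hz. simpl in Hz. apply in_app_or; auto. }
    destruct K as [K|K].
    + apply IHGT1. constructor; auto.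
    + apply IHGT2. constructor; auto.
  - intros RG HR. destruct (IHGT _ HR) as [RD [HD Hv]].
    inversion HD as [|x f' cc RD0 Ha Hb]; subst.
    exists (f' :: RD0). split; auto. constructor; auto.
    refine (res_plug_mono c fL (Idis fL fR) _ _ Ha). intros z Hz. simpl. apply in_or_app; auto.
  - intros RG HR. destruct (IHGT _ HR) as [RD [HD Hv]].
    inversion HD as [|x f' cc RD0 Ha Hb]; subst.
    exists (f' :: RD0). split; auto. constructor; auto.
    refine (res_plug_mono c fR (Idis fL fR) _ _ Ha). intros z Hz. simpl. apply in_or_app; auto.
  - intros RG HR. apply resL_app_inv in HR. destruct HR as [RP [RGg [-> [HP HG]]]].
    destruct (IHGT1 _ HG) as [RD [HD Hv]].
    inversion HD as [|x f' cc RD0 Ha Hb]; subst.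
    destruct (IHGT2 (f' :: RP)) as [RS [HS Hs]]. { constructor; auto. }
    exists (RD0 ++ RS). split. { apply resL_app; auto. }
    intros v Hv'. destruct (Hv v) as [y [[<-|Hy] E]].
    { intros x Hx. apply Hv'. apply in_or_app; auto. }
    + destruct (Hs v) as [z [Hz Ez]].
      { intros x [<-|Hx]; auto. apply Hv'. apply in_or_app; auto. }
      exists z. split; auto. apply in_or_app; auto.
    + exists y. split; auto. apply in_or_app; auto.
Qed.

Fixpoint size (f : form) : nat :=
  match f with
  | Var _ | Bot => 1
  | Neg a => S (size a)
  | And a b | Or a b | Idis a b => S (size a + size b)
  end.

Fixpoint sizeL (G : list form) : nat :=
  match G with [] => 0 | f :: G' => size f + sizeL G' end.

Lemma sizeL_perm G G' : Permutation G G' -> sizeL G = sizeL G'.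
Proof. induction 1; simpl; lia. Qed.

Lemma sizeL_app G G' : sizeL (G ++ G') = sizeL G + sizeL G'.
Proof. induction G; simpl; lia. Qed.

Lemma in_perm {A} (x : A) l : In x l -> exists l', Permutation l (x :: l').
Proof.
  intros H. apply in_split in H. destruct H as [l1 [l2 ->]].
  exists (l1 ++ l2). apply Permutation_sym, Permutation_middle.
Qed.

Definition atomic (f : form) : Prop := match f with Var _ | Bot => True | _ => False end.

Definition entL (G D : list form) := forall v, (forall x, In x G -> ev v x = true) -> exists y, In y D /\ ev v y = true.

Lemma entL_perm G D G' D' : entL G D -> Permutation G G' -> Permutation D D' -> entL G' D'.
Proof.
  intros H HG HD v Hv. destruct (H v) as [y [Hy E]].
  - intros x Hx. apply Hv. eapply Permutation_in; eauto.
  - exists y. split; auto. eapply Permutation_in; eauto.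
Qed.

Ltac gperm P1 P2 := eapply GT_perm; [exact P1|exact P2|].

Lemma cl_complete n : forall G D, sizeL G + sizeL D <= n ->
  all_classical G -> all_classical D -> entL G D -> GT false G D.
Proof.
  induction n as [|n IH]; intros G D Hs HG HD He.
  { destruct G as [|g G]; [|destruct g; simpl in Hs; lia].
    destruct D as [|d D]; [|destruct d; simpl in Hs; lia].
    destruct (He (fun _ => true)) as [y [[] _]]. intros x []. }
  destruct (classic (exists f, In f G /\ ~ atomic f)) as [[f [Hf Hna]]|HnaG].
  { destruct (in_perm _ _ Hf) as [G0 HP].
    assert (HG0 : all_classical (f :: G0)). { eapply Permutation_Forall; eauto. }
    assert (Hs0 : size f + sizeL G0 + sizeL D <= S n). { rewrite (sizeL_perm _ _ HP) in Hs. simpl in Hs. lia. }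
    assert (He0 : entL (f :: G0) D). { eapply entL_perm; eauto. }
    inversion HG0 as [|x y Hcf HG0']; subst.
    gperm (Permutation_sym HP) (Permutation_refl D).
    destruct f; simpl in Hna; try tauto; simpl in Hcf, Hs0; try discriminate.
    - apply GT_Lneg; auto. apply IH; auto.
      + simpl. lia.
      + constructor; auto.
      + intros v Hv. destruct (ev v f) eqn:E. { exists f; simpl; auto. }
        destruct (He0 v) as [y [Hy Ey]]; [|exists y; simpl; auto].
        intros x [<-|Hx]; auto. simpl. rewrite E; auto.
    - apply andb_true_iff in Hcf. destruct Hcf.
      apply GT_Land. apply IH; auto. { simpl. lia. } { repeat constructor; auto. }
      intros v Hv. apply He0. intros x [<-|Hx]; [|apply Hv; simpl; auto]. simpl.
      rewrite (Hv f1), (Hv f2); simpl; auto.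
    - apply andb_true_iff in Hcf. destruct Hcf.
      rewrite <- (app_nil_r D). apply GT_Lor; auto.
      + apply IH; auto. { simpl. lia. } { constructor; auto. }
        intros v Hv. apply He0. intros x [<-|Hx]; [|apply Hv; simpl; auto]. simpl. rewrite (Hv f1); simpl; auto.
      + apply IH; auto. { simpl. lia. } { constructor; auto. }
        intros v Hv. apply He0. intros x [<-|Hx]; [|apply Hv; simpl; auto]. simpl. rewrite (Hv f2); simpl; auto.
        apply orb_true_r. }
  destruct (classic (exists f, In f D /\ ~ atomic f)) as [[f [Hf Hna]]|HnaD].
  { destruct (in_perm _ _ Hf) as [D0 HP].
    assert (HD0 : all_classical (f :: D0)). { eapply Permutation_Forall; eauto. }
    assert (Hs0 : sizeL G + (size f + sizeL D0) <= S n). { rewrite (sizeL_perm _ _ HP) in Hs. simpl in Hs. lia. }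
    assert (He0 : entL G (f :: D0)). { eapply entL_perm; eauto. }
    inversion HD0 as [|x y Hcf HD0']; subst.
    gperm (Permutation_refl G) (Permutation_sym HP).
    destruct f; simpl in Hna; try tauto; simpl in Hcf, Hs0; try discriminate.
    - apply GT_Rneg; auto. apply IH; auto.
      + simpl. lia.
      + constructor; auto.
      + intros v Hv. destruct (He0 v) as [y [[<-|Hy] E]].
        { intros x Hx. apply Hv. simpl; auto. }
        * simpl in E. specialize (Hv f (or_introl eq_refl)). rewrite Hv in E. discriminate.
        * eauto.
    - apply andb_true_iff in Hcf. destruct Hcf.
      rewrite <- (app_nil_r D0). apply GT_Rand; auto.
      + apply IH; auto. { simpl. lia. } { constructor; auto. }
        intros v Hv. destruct (He0 v Hv) as [y [[<-|Hy] E]]; [|exists y; simpl; auto].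
        simpl in E. apply andb_true_iff in E. exists f1. simpl. tauto.
      + apply IH; auto. { simpl. lia. } { constructor; auto. }
        intros v Hv. destruct (He0 v Hv) as [y [[<-|Hy] E]]; [|exists y; simpl; auto].
        simpl in E. apply andb_true_iff in E. exists f2. simpl. tauto.
    - apply andb_true_iff in Hcf. destruct Hcf.
      apply GT_Ror. apply IH; auto. { simpl. lia. } { repeat constructor; auto. }
      intros v Hv. destruct (He0 v Hv) as [y [[<-|Hy] E]]; [|exists y; simpl; auto].
      simpl in E. apply orb_true_iff in E. destruct E; [exists f1|exists f2]; simpl; auto. }
  destruct (classic (In Bot G)) as [HB|HB].
  { destruct (in_perm _ _ HB) as [G0 HP]. gperm (Permutation_sym HP) (Permutation_refl D).
    apply GT_bot. }
  set (v := fun p => existsb (fun h => match h with Var q => Nat.eqb p q | _ => false end) G).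
  destruct (He v) as [y [Hy E]].
  { intros x Hx. destruct x; try (exfalso; apply HnaG; eexists; split; [exact Hx|simpl; tauto]).
    - simpl. unfold v. apply existsb_exists. exists (Var n0). rewrite Nat.eqb_refl. auto.
    }
  destruct y; try (exfalso; apply HnaD; eexists; split; [exact Hy|simpl; tauto]).
  - simpl in E. unfold v in E. apply existsb_exists in E. destruct E as [h [Hh Eh]].
    destruct h; try discriminate. apply Nat.eqb_eq in Eh. subst.
    destruct (in_perm _ _ Hh) as [G0 HP]. destruct (in_perm _ _ Hy) as [D0 HP'].
    gperm (Permutation_sym HP) (Permutation_sym HP'). apply GT_ax.
  - discriminate.
Qed.

Fixpoint capp (c d : ctx) : ctx :=
  match c with
  | Hole => d
  | CAndL c' b => CAndL (capp c' d) b
  | CAndR a c' => CAndR a (capp c' d)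
  | COrL c' b => COrL (capp c' d) b
  | COrR a c' => COrR a (capp c' d)
  | CIdisL c' b => CIdisL (capp c' d) b
  | CIdisR a c' => CIdisR a (capp c' d)
  end.

Lemma plug_capp c d e : plug (capp c d) e = plug c (plug d e).
Proof. induction c; simpl; congruence. Qed.

Lemma lift f : forall c G D r, In r (res f) -> GT false G (plug c r :: D) -> GT false G (plug c f :: D).
Proof.
  induction f; intros c G D r Hr H.
  - destruct Hr as [<-|[]]; auto.
  - destruct Hr as [<-|[]]; auto.
  - destruct Hr as [<-|[]]; auto.
  - apply in_res_And in Hr. destruct Hr as [x [y [-> [H1 H2]]]].
    assert (K1 : GT false G (plug (capp c (CAndL Hole y)) f1 :: D)).
    { apply (IHf1 _ _ _ x H1). rewrite plug_capp. exact H. }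
    rewrite plug_capp in K1; simpl in K1.
    assert (K2 : GT false G (plug (capp c (CAndR f1 Hole)) f2 :: D)).
    { apply (IHf2 _ _ _ y H2). rewrite plug_capp. exact K1. }
    rewrite plug_capp in K2. exact K2.
  - apply in_res_Or in Hr. destruct Hr as [x [y [-> [H1 H2]]]].
    assert (K1 : GT false G (plug (capp c (COrL Hole y)) f1 :: D)).
    { apply (IHf1 _ _ _ x H1). rewrite plug_capp. exact H. }
    rewrite plug_capp in K1; simpl in K1.
    assert (K2 : GT false G (plug (capp c (COrR f1 Hole)) f2 :: D)).
    { apply (IHf2 _ _ _ y H2). rewrite plug_capp. exact K1. }
    rewrite plug_capp in K2. exact K2.
  - simpl in Hr. apply in_app_or in Hr. destruct Hr as [Hr|Hr].
    + apply GT_RidisL. eapply IHf1; eauto.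
    + apply GT_RidisR. eapply IHf2; eauto.
Qed.

Lemma liftL G D RD : resL D RD -> forall E, GT false G (RD ++ E) -> GT false G (D ++ E).
Proof.
  induction 1 as [|f r D RD Hr HR IH]; intros E H; auto.
  simpl in *.
  assert (K : GT false G (D ++ r :: E)).
  { apply IH. eapply GT_perm; [apply Permutation_refl| |exact H]. apply Permutation_middle. }
  assert (K2 : GT false G (plug Hole r :: D ++ E)).
  { eapply GT_perm; [apply Permutation_refl| |exact K]. apply Permutation_sym, Permutation_middle. }
  apply (lift f Hole) in K2; auto.
Qed.

Lemma decompose f : wf f = true -> classical f = false -> exists c a b, f = plug c (Idis a b).
Proof.
  induction f; simpl; intros Hw Hc; try discriminate.
  - rewrite Hw in Hc; discriminate.
  - apply andb_true_iff in Hw. destruct Hw as [W1 W2].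
    destruct (classical f1) eqn:E1.
    + destruct (IHf2 W2 Hc) as [c [a [b ->]]]. exists (CAndR f1 c), a, b; reflexivity.
    + destruct (IHf1 W1 eq_refl) as [c [a [b ->]]]. exists (CAndL c f2), a, b; reflexivity.
  - apply andb_true_iff in Hw. destruct Hw as [W1 W2].
    destruct (classical f1) eqn:E1.
    + destruct (IHf2 W2 Hc) as [c [a [b ->]]]. exists (COrR f1 c), a, b; reflexivity.
    + destruct (IHf1 W1 eq_refl) as [c [a [b ->]]]. exists (COrL c f2), a, b; reflexivity.
  - exists Hole, f1, f2. reflexivity.
Qed.

Lemma wf_plug c X Y : wf (plug c Y) = true -> wf X = true -> wf (plug c X) = true.
Proof.
  induction c; simpl; intros H1 H2; auto; apply andb_true_iff in H1; destruct H1;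
  apply andb_true_iff; split; auto.
Qed.

Lemma wf_plug_inv c Y : wf (plug c Y) = true -> wf Y = true.
Proof. induction c; simpl; intros H; auto; apply andb_true_iff in H; destruct H; auto. Qed.

Lemma size_plug c X Y : size X < size Y -> size (plug c X) < size (plug c Y).
Proof. induction c; simpl; lia. Qed.

Lemma res_wf_classical f r : wf f = true -> In r (res f) -> classical r = true.
Proof.
  revert r. induction f; simpl; intros r Hw Hr.
  - destruct Hr as [<-|[]]; auto.
  - destruct Hr as [<-|[]]; auto.
  - destruct Hr as [<-|[]]; auto.
  - apply andb_true_iff in Hw. destruct Hw.
    apply (in_res_And f1 f2) in Hr. destruct Hr as [x [y [-> [H1 H2]]]]. simpl.
    rewrite (IHf1 x), (IHf2 y); auto.
  - apply andb_true_iff in Hw. destruct Hw.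
    apply (in_res_Or f1 f2) in Hr. destruct Hr as [x [y [-> [H1 H2]]]]. simpl.
    rewrite (IHf1 x), (IHf2 y); auto.
  - apply andb_true_iff in Hw. destruct Hw.
    apply in_app_or in Hr. destruct Hr; auto.
Qed.

Lemma resL_wf_cl D RD : resL D RD -> Forall (fun f => wf f = true) D -> all_classical RD.
Proof.
  induction 1 as [|f r D0 RD0 Hr HR IH]; intros H; constructor; inversion H as [|a b Hw Hws]; subst; [eapply res_wf_classical; eauto | apply IH; auto].
Qed.

Lemma complete_cl G D : all_classical G -> Forall (fun f => wf f = true) D -> valid G D -> GT false G D.
Proof.
  intros HG HD HV.
  destruct (HV G (resL_self _ HG)) as [RD [HR He]].
  rewrite <- (app_nil_r D). apply (liftL _ _ _ HR). rewrite app_nil_r.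
  apply (cl_complete (sizeL G + sizeL RD)); auto.
  eapply resL_wf_cl; eauto.
Qed.

Lemma complete n : forall G D, sizeL G <= n -> Forall (fun f => wf f = true) G ->
  Forall (fun f => wf f = true) D -> valid G D -> GT false G D.
Proof.
  induction n as [|n IH]; intros G D Hs HG HD HV.
  - destruct G as [|g G]; [|destruct g; simpl in Hs; lia].
    apply complete_cl; auto. constructor.
  - destruct (classic (exists f, In f G /\ classical f = false)) as [[f [Hf Hc]]|Hn].
    + destruct (in_perm _ _ Hf) as [G0 HP].
      assert (HG0 : Forall (fun f => wf f = true) (f :: G0)). { eapply Permutation_Forall; eauto. }
      inversion HG0 as [|x y Hwf HG0']; subst.
      destruct (decompose f Hwf Hc) as [c [a [b ->]]].
      assert (HV0 : valid (plug c (Idis a b) :: G0) D). { eapply valid_perm; eauto. }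
      rewrite (sizeL_perm _ _ HP) in Hs. simpl in Hs.
      eapply GT_perm; [apply Permutation_sym; exact HP|apply Permutation_refl|].
      apply GT_Lidis.
      * apply IH; auto.
        -- simpl. assert (size (plug c a) < size (plug c (Idis a b))) by (apply size_plug; simpl; lia). lia.
        -- constructor; auto. eapply wf_plug; eauto.
           apply wf_plug_inv in Hwf. simpl in Hwf. apply andb_true_iff in Hwf. tauto.
        -- intros RG HR. inversion HR as [|x r cc RG0 Ha Hb]; subst. apply HV0. constructor; auto.
           refine (res_plug_mono c a (Idis a b) _ _ Ha). intros z Hz. simpl. apply in_or_app; auto.
      * apply IH; auto.
        -- simpl. assert (size (plug c b) < size (plug c (Idis a b))) by (apply size_plug; simpl; lia). lia.
        -- constructor; auto. eapply wf_plug; eauto.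
           apply wf_plug_inv in Hwf. simpl in Hwf. apply andb_true_iff in Hwf. tauto.
        -- intros RG HR. inversion HR as [|x r cc RG0 Ha Hb]; subst. apply HV0. constructor; auto.
           refine (res_plug_mono c b (Idis a b) _ _ Ha). intros z Hz. simpl. apply in_or_app; auto.
    + apply complete_cl; auto. apply Forall_forall. intros f Hf.
      destruct (classical f) eqn:E; auto. exfalso; eauto.
Qed.

Lemma completeness G D : Forall (fun f => wf f = true) G ->
  Forall (fun f => wf f = true) D -> valid G D -> GT false G D.
Proof. apply (complete (sizeL G)); auto. Qed.

Fixpoint subst (p : nat) (c : form) (f : form) : form :=
  match f with
  | Var q => if Nat.eqb q p then c else Var q
  | Bot => Bot
  | Neg a => Neg (subst p c a)
  | And a b => And (subst p c a) (subst p c b)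
  | Or a b => Or (subst p c a) (subst p c b)
  | Idis a b => Idis (subst p c a) (subst p c b)
  end.

Definition upd (v : nat -> bool) p b := fun q => if Nat.eqb q p then b else v q.

Lemma ev_ext X v w : (forall q, v q = w q) -> ev v X = ev w X.
Proof. intros H; induction X; simpl; congruence. Qed.

Lemma ev_subst p c X v : ev v (subst p c X) = ev (upd v p (ev v c)) X.
Proof.
  induction X; simpl; try congruence.
  unfold upd. destruct (Nat.eqb n p); reflexivity.
Qed.

Lemma ev_upd_same v p b X : v p = b -> ev (upd v p b) X = ev v X.
Proof.
  intros H. apply ev_ext. intros q. unfold upd. destruct (Nat.eqb q p) eqn:E; auto.
  apply Nat.eqb_eq in E. subst. auto.
Qed.

Lemma mono p X : forall s v w, ~ pvar (negb s) X p -> (forall q, q <> p -> v q = w q) ->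
  (if s then (v p = true -> w p = true) else (w p = true -> v p = true)) ->
  ev v X = true -> ev w X = true.
Proof.
  induction X; simpl; intros s v w Hp Ha Hs He; auto.
  - destruct (Nat.eq_dec n p) as [->|Hn].
    + destruct s; simpl in *; auto; exfalso; apply Hp; auto.
    + rewrite <- Ha; auto.
  - rewrite negb_involutive in Hp.
    destruct (ev w X) eqn:E; auto. exfalso.
    assert (ev v X = true). { apply (IHX (negb s) w v); auto.
      - rewrite negb_involutive. auto.
      - intros q Hq. symmetry; auto.
      - destruct s; auto. }
    rewrite H in He. discriminate.
  - apply andb_true_iff in He. destruct He. apply andb_true_iff. split.
    + apply (IHX1 s v w); auto.
    + apply (IHX2 s v w); auto.
  - apply orb_true_iff in He. apply orb_true_iff. destruct He; [left; apply (IHX1 s v w)|right; apply (IHX2 s v w)]; auto.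
  - apply orb_true_iff in He. apply orb_true_iff. destruct He; [left; apply (IHX1 s v w)|right; apply (IHX2 s v w)]; auto.
Qed.

Lemma agree_upd v p b : forall q, q <> p -> upd v p b q = v q.
Proof. intros q H. unfold upd. destruct (Nat.eqb q p) eqn:E; auto. apply Nat.eqb_eq in E. contradiction. Qed.

Definition ent X Y := forall v, ev v X = true -> ev v Y = true.

Section Step.
Variable Lf Rt : bool -> nat -> Prop.

Lemma key X B p : ent X B -> (forall s q, pvar s X q -> Lf s q) -> (forall s q, pvar s B q -> Rt s q) ->
  forall v b, ev (upd v p b) X = true ->
  (b = v p \/ (b = false /\ ~ (Lf false p /\ Rt false p)) \/ (b = true /\ ~ (Lf true p /\ Rt true p))) ->
  ev v B = true.
Proof.
  intros HXB HX HB v b HE Hb.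
  destruct Hb as [->|[[-> HN]|[-> HP]]].
  - rewrite ev_upd_same in HE; auto.
  - destruct (classic (Lf false p)) as [L|L].
    + assert (R : ~ Rt false p) by tauto.
      apply (mono p B true (upd v p false) v).
      * intros Hp. apply R. apply HB. exact Hp.
      * intros q Hq. apply agree_upd; auto.
      * unfold upd. rewrite Nat.eqb_refl. discriminate.
      * exact (HXB _ HE).
    + apply (HXB v). apply (mono p X true (upd v p false) v).
      * intros Hp. apply L. apply HX. exact Hp.
      * intros q Hq. apply agree_upd; auto.
      * unfold upd. rewrite Nat.eqb_refl. discriminate.
      * exact HE.
  - destruct (classic (Lf true p)) as [L|L].
    + assert (R : ~ Rt true p) by tauto.
      apply (mono p B false (upd v p true) v).
      * intros Hp. apply R. apply HB. exact Hp.
      * intros q Hq. apply agree_upd; auto.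
      * unfold upd. rewrite Nat.eqb_refl. auto.
      * exact (HXB _ HE).
    + apply (HXB v). apply (mono p X false (upd v p true) v).
      * intros Hp. apply L. apply HX. exact Hp.
      * intros q Hq. apply agree_upd; auto.
      * unfold upd. rewrite Nat.eqb_refl. auto.
      * exact HE.
Qed.

Lemma pvar_subst p c X : (forall s q, ~ pvar s c q) -> forall s q, pvar s (subst p c X) q -> q <> p /\ pvar s X q.
Proof.
  intros Hc. induction X; simpl; intros s q H; try tauto.
  - destruct (Nat.eqb n p) eqn:E. { exfalso; eapply Hc; eauto. }
    simpl in H. destruct H as [H1 ->]. apply Nat.eqb_neq in E. auto.
  - apply IHX in H. tauto.
  - destruct H as [H|H]; [apply IHX1 in H|apply IHX2 in H]; tauto.
  - destruct H as [H|H]; [apply IHX1 in H|apply IHX2 in H]; tauto.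
  - destruct H as [H|H]; [apply IHX1 in H|apply IHX2 in H]; tauto.
Qed.

Lemma classical_subst p c X : classical c = true -> classical X = true -> classical (subst p c X) = true.
Proof.
  intros Hc. induction X; simpl; intros H; auto.
  - destruct (Nat.eqb n p); auto.
  - apply andb_true_iff in H. apply andb_true_iff. tauto.
  - apply andb_true_iff in H. apply andb_true_iff. tauto.
Qed.

Definition Top := Neg Bot.

Lemma novar_Bot : forall s q, ~ pvar s Bot q. Proof. simpl; auto. Qed.
Lemma novar_Top : forall s q, ~ pvar s Top q. Proof. simpl; auto. Qed.

Lemma step X p : classical X = true -> (forall s q, pvar s X q -> Lf s q) ->
  exists Y, classical Y = true /\ ent X Y /\
    (forall B, (forall s q, pvar s B q -> Rt s q) -> ent X B -> ent Y B) /\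
    (forall s q, pvar s Y q -> (q <> p /\ pvar s X q) \/ (q = p /\ Lf s p /\ Rt s p)).
Proof.
  intros HXc HX.
  assert (S0 := pvar_subst p Bot X novar_Bot).
  assert (S1 := pvar_subst p Top X novar_Top).
  assert (C0 : classical (subst p Bot X) = true) by (apply classical_subst; auto).
  assert (C1 : classical (subst p Top X) = true) by (apply classical_subst; auto).
  assert (E0 : forall v, ev v (subst p Bot X) = ev (upd v p false) X) by (intros; apply ev_subst).
  assert (E1 : forall v, ev v (subst p Top X) = ev (upd v p true) X) by (intros; apply ev_subst).
  destruct (classic (Lf true p /\ Rt true p)) as [HP|HP];
  destruct (classic (Lf false p /\ Rt false p)) as [HN|HN].
  - exists X. split; auto. split. { intros v; auto. } split; auto.
    intros s q H. destruct (Nat.eq_dec q p) as [->|Hq]; auto. right. split; auto. destruct s; auto.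
  - exists (Or (subst p Bot X) (And (Var p) (subst p Top X))). split.
    { simpl. rewrite C0, C1. auto. } split; [|split].
    + intros v Hv. simpl. rewrite E0, E1. destruct (v p) eqn:E.
      * rewrite (ev_upd_same v p true X E), Hv. apply orb_true_r.
      * rewrite (ev_upd_same v p false X E), Hv. auto.
    + intros B HB HXB v Hv. simpl in Hv. rewrite E0, E1 in Hv.
      apply orb_true_iff in Hv. destruct Hv as [Hv|Hv].
      * eapply key; eauto.
      * apply andb_true_iff in Hv. destruct Hv as [Hp Hv]. eapply key; eauto.
    + intros s q H. simpl in H. destruct H as [H|[[Hs ->]|H]].
      * apply S0 in H. auto.
      * subst. right. auto.
      * apply S1 in H. auto.
  - exists (Or (subst p Top X) (And (Neg (Var p)) (subst p Bot X))). split.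
    { simpl. rewrite C0, C1. auto. } split; [|split].
    + intros v Hv. simpl. rewrite E0, E1. destruct (v p) eqn:E.
      * rewrite (ev_upd_same v p true X E), Hv. auto.
      * rewrite (ev_upd_same v p false X E), Hv. rewrite orb_true_r. auto.
    + intros B HB HXB v Hv. simpl in Hv. rewrite E0, E1 in Hv.
      apply orb_true_iff in Hv. destruct Hv as [Hv|Hv].
      * eapply key; eauto.
      * apply andb_true_iff in Hv. destruct Hv as [Hp Hv]. apply negb_true_iff in Hp.
        eapply key; eauto.
    + intros s q H. simpl in H. destruct H as [H|[[Hs ->]|H]].
      * apply S1 in H. auto.
      * destruct s; try discriminate. right. auto.
      * apply S0 in H. auto.
  - exists (Or (subst p Top X) (subst p Bot X)). split.
    { simpl. rewrite C0, C1. auto. } split; [|split].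
    + intros v Hv. simpl. rewrite E0, E1. destruct (v p) eqn:E.
      * rewrite (ev_upd_same v p true X E), Hv. auto.
      * rewrite (ev_upd_same v p false X E), Hv. apply orb_true_r.
    + intros B HB HXB v Hv. simpl in Hv. rewrite E0, E1 in Hv.
      apply orb_true_iff in Hv. destruct Hv as [Hv|Hv]; eapply key; eauto.
    + intros s q H. simpl in H. destruct H as [H|H].
      * apply S1 in H. auto.
      * apply S0 in H. auto.
Qed.

Lemma elim : forall todo X, classical X = true ->
  (forall s q, pvar s X q -> Lf s q /\ (Rt s q \/ In q todo)) ->
  exists Y, classical Y = true /\ ent X Y /\
    (forall B, (forall s q, pvar s B q -> Rt s q) -> ent X B -> ent Y B) /\
    (forall s q, pvar s Y q -> Lf s q /\ Rt s q).
Proof.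
  induction todo as [|p todo IH]; intros X HXc HX.
  - exists X. split; auto. split. { intros v; auto. } split; auto.
    intros s q H. destruct (HX s q H) as [H1 [H2|[]]]. auto.
  - destruct (step X p HXc) as [Y [HYc [HXY [HB HY]]]].
    { intros s q H. apply HX in H. tauto. }
    destruct (IH Y HYc) as [Z [HZc [HYZ [HB' HZ]]]].
    { intros s q H. destruct (HY s q H) as [[Hq H']|[-> H']]; [|tauto].
      destruct (HX s q H') as [H1 [H2|[H2|H2]]]; auto. congruence. }
    exists Z. split; auto. split. { intros v Hv; auto. } split; auto.
Qed.

End Step.

Fixpoint vars (f : form) : list nat :=
  match f with
  | Var p => [p] | Bot => []
  | Neg a => vars a
  | And a b | Or a b | Idis a b => vars a ++ vars b
  end.

Lemma pvar_vars f : forall s q, pvar s f q -> In q (vars f).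
Proof.
  induction f; simpl; intros s q H; try tauto.
  - destruct H as [_ ->]; auto.
  - eauto.
  - apply in_or_app. destruct H; eauto.
  - apply in_or_app. destruct H; eauto.
  - apply in_or_app. destruct H; eauto.
Qed.

Fixpoint conjL (l : list form) : form := match l with [] => Neg Bot | x :: l' => And x (conjL l') end.
Fixpoint disjL (l : list form) : form := match l with [] => Bot | x :: l' => Or x (disjL l') end.
Fixpoint idisjL (l : list form) : form := match l with [] => Bot | x :: l' => Idis x (idisjL l') end.

Lemma ev_conjL v l : ev v (conjL l) = true <-> forall x, In x l -> ev v x = true.
Proof.
  induction l; simpl. { split; [intros _ x []|auto]. }
  rewrite andb_true_iff, IHl. split.
  - intros [H1 H2] x [<-|Hx]; auto.
  - intros H. split; auto.
Qed.

Lemma ev_disjL v l : ev v (disjL l) = true <-> exists x, In x l /\ ev v x = true.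
Proof.
  induction l; simpl. { split. discriminate. intros [x [[] _]]. }
  rewrite orb_true_iff, IHl. split.
  - intros [H|[x [H1 H2]]]; eauto.
  - intros [x [[<-|H1] H2]]; eauto.
Qed.

Lemma cl_conjL l : all_classical l -> classical (conjL l) = true.
Proof. induction 1; simpl; auto. rewrite H, IHForall. auto. Qed.
Lemma cl_disjL l : all_classical l -> classical (disjL l) = true.
Proof. induction 1; simpl; auto. rewrite H, IHForall. auto. Qed.

Lemma pvar_conjL l s q : pvar s (conjL l) q -> exists x, In x l /\ pvar s x q.
Proof. induction l; simpl; [tauto|]. intros [H|H]; [eauto|]. destruct (IHl H) as [x [? ?]]; eauto. Qed.
Lemma pvar_disjL l s q : pvar s (disjL l) q -> exists x, In x l /\ pvar s x q.
Proof. induction l; simpl; [tauto|]. intros [H|H]; [eauto|]. destruct (IHl H) as [x [? ?]]; eauto. Qed.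
Lemma pvar_idisjL l s q : pvar s (idisjL l) q -> exists x, In x l /\ pvar s x q.
Proof. induction l; simpl; [tauto|]. intros [H|H]; [eauto|]. destruct (IHl H) as [x [? ?]]; eauto. Qed.

Lemma classical_wf f : classical f = true -> wf f = true.
Proof.
  induction f; simpl; intros H; auto; try discriminate;
  apply andb_true_iff in H; destruct H; rewrite IHf1, IHf2; auto.
Qed.

Lemma wf_idisjL l : Forall (fun f => wf f = true) l -> wf (idisjL l) = true.
Proof. induction 1; simpl; auto. rewrite H, IHForall; auto. Qed.

Lemma res_idisjL l r : In r (res (idisjL l)) -> r = Bot \/ exists x, In x l /\ In r (res x).
Proof.
  induction l; simpl. { intros [<-|[]]; auto. }
  intros H. apply in_app_or in H. destruct H as [H|H]; eauto.
  destruct (IHl H) as [?|[x [? ?]]]; eauto.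
Qed.

Lemma res_idisjL_in l x r : In x l -> In r (res x) -> In r (res (idisjL l)).
Proof.
  induction l; simpl; [tauto|]. intros [->|H] Hr; apply in_or_app; auto.
Qed.

Fixpoint allres (G : list form) : list (list form) :=
  match G with
  | [] => [[]]
  | f :: G' => flat_map (fun r => map (cons r) (allres G')) (res f)
  end.

Lemma allres_iff G RG : In RG (allres G) <-> resL G RG.
Proof.
  revert RG. induction G as [|f G IH]; intros RG; simpl.
  - split. { intros [<-|[]]. constructor. } intros H. inversion H. auto.
  - rewrite in_flat_map. split.
    + intros [r [Hr H]]. apply in_map_iff in H. destruct H as [R [<- HR]].
      constructor; auto. apply IH; auto.
    + intros H. inversion H as [|a r b R Hr HR]; subst. exists r. split; auto.
      apply in_map_iff. exists R. split; auto. apply IH; auto.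
Qed.

Lemma res_pvar f : forall r s q, In r (res f) -> pvar s r q -> pvar s f q.
Proof.
  induction f; simpl; intros r s q Hr Hp.
  - destruct Hr as [<-|[]]; auto.
  - destruct Hr as [<-|[]]; auto.
  - destruct Hr as [<-|[]]; auto.
  - apply (in_res_And f1 f2) in Hr. destruct Hr as [x [y [-> [H1 H2]]]].
    simpl in Hp. destruct Hp; eauto.
  - apply (in_res_Or f1 f2) in Hr. destruct Hr as [x [y [-> [H1 H2]]]].
    simpl in Hp. destruct Hp; eauto.
  - apply in_app_or in Hr. destruct Hr; eauto.
Qed.

Lemma resL_pvar G RG : resL G RG -> forall r s q, In r RG -> pvar s r q -> pvarL s G q.
Proof.
  induction 1 as [|f r G RG Hr HR IH]; simpl; intros x s q Hx Hp; [tauto|].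
  destruct Hx as [<-|Hx].
  - exists f. split; simpl; eauto using res_pvar.
  - destruct (IH x s q Hx Hp) as [g [Hg Hg']]. exists g. simpl; auto.
Qed.

Lemma Forall2_in_l {A B} (P : A -> B -> Prop) l l' a : Forall2 P l l' -> In a l -> exists b, In b l' /\ P a b.
Proof.
  induction 1; simpl; [tauto|]. intros [->|H']; eauto.
  destruct (IHForall2 H') as [b [? ?]]; eauto.
Qed.
Lemma Forall2_in_r {A B} (P : A -> B -> Prop) l l' b : Forall2 P l l' -> In b l' -> exists a, In a l /\ P a b.
Proof.
  induction 1; simpl; [tauto|]. intros [->|H']; eauto.
  destruct (IHForall2 H') as [a [? ?]]; eauto.
Qed.
Lemma Forall2_exists {A B} (P : A -> B -> Prop) l : (forall a, In a l -> exists b, P a b) -> exists l', Forall2 P l l'.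
Proof.
  induction l as [|a l IH]; intros H. { exists []; constructor. }
  destruct (H a (or_introl eq_refl)) as [b Hb].
  destruct IH as [l' Hl']. { intros; apply H; simpl; auto. }
  exists (b :: l'). constructor; auto.
Qed.

Theorem theorem8p1 :
  forall (G D G1 G2 L1 D2 : list form),
    Forall (fun f => wf f = true) G -> Forall (fun f => wf f = true) D ->
    GT true G D ->
    Permutation G (G1 ++ G2) -> Permutation D (L1 ++ D2) ->
    all_classical L1 ->
    exists phi, interpolant G1 G2 L1 D2 phi /\
                (all_classical D2 -> classical phi = true).
Proof.
  intros G D G1 G2 L1 D2 WG WD HGT PG PD CL1.
  assert (HV : valid (G1 ++ G2) (L1 ++ D2)) by (eapply valid_perm; [eapply sound; eauto|auto|auto]).
  assert (WG12 : Forall (fun f => wf f = true) (G1 ++ G2)) by (eapply Permutation_Forall; eauto).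
  assert (WLD : Forall (fun f => wf f = true) (L1 ++ D2)) by (eapply Permutation_Forall; eauto).
  apply Forall_app in WG12. destruct WG12 as [WG1 WG2].
  apply Forall_app in WLD. destruct WLD as [WL1 WD2].
  set (Lf := fun s q => pvarL s G1 q \/ pvarL (negb s) L1 q).
  set (Rt := fun s q => pvarL (negb s) G2 q \/ pvarL s D2 q).
  set (A := fun rho => And (conjL rho) (Neg (disjL L1))).
  set (Pth := fun rho th => classical th = true /\ ent (A rho) th /\
    (forall B, (forall s q, pvar s B q -> Rt s q) -> ent (A rho) B -> ent th B) /\
    (forall s q, pvar s th q -> Lf s q /\ Rt s q)).
  destruct (Forall2_exists Pth (allres G1)) as [ths Hths].
  { intros rho Hrho. apply allres_iff in Hrho.
    assert (Crho : all_classical rho) by (eapply resL_wf_cl; eauto).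
    apply (elim Lf Rt (vars (A rho)) (A rho)).
    - simpl. rewrite cl_conjL, cl_disjL; auto.
    - intros s q H. split; [|right; eapply pvar_vars; eauto].
      simpl in H. destruct H as [H|H].
      + left. destruct (pvar_conjL _ _ _ H) as [x [Hx Hp]]. eapply resL_pvar; eauto.
      + right. destruct (pvar_disjL _ _ _ H) as [x [Hx Hp]]. exists x; auto. }
  assert (K : forall rho th kappa, In rho (allres G1) -> Pth rho th -> resL G2 kappa ->
     exists eps, resL D2 eps /\ forall v, ev v th = true -> (forall x, In x kappa -> ev v x = true) ->
       exists y, In y eps /\ ev v y = true).
  { intros rho th kappa Hrho [Cth [E1 [E2 E3]]] Hk. apply allres_iff in Hrho.
    destruct (HV (rho ++ kappa)) as [RD [HRD HRe]]. { apply resL_app; auto. }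
    apply resL_app_inv in HRD. destruct HRD as [RL [eps [-> [HRL Heps]]]].
    apply resL_classical in HRL; auto. subst RL.
    exists eps. split; auto.
    set (B := Or (Neg (conjL kappa)) (disjL eps)).
    assert (HB : ent th B).
    { apply E2.
      - intros s q H. simpl in H. destruct H as [H|H].
        + left. destruct (pvar_conjL _ _ _ H) as [x [Hx Hp]]. eapply resL_pvar; eauto.
        + right. destruct (pvar_disjL _ _ _ H) as [x [Hx Hp]]. eapply resL_pvar; eauto.
      - intros v Hv. simpl in Hv. apply andb_true_iff in Hv. destruct Hv as [Hr Hl].
        apply negb_true_iff in Hl. simpl. apply orb_true_iff.
        destruct (ev v (conjL kappa)) eqn:Ek; [right|left; auto].
        pose proof (proj1 (ev_conjL v rho) Hr) as Hr'. pose proof (proj1 (ev_conjL v kappa) Ek) as Ek'.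
        destruct (HRe v) as [y [Hy Ey]].
        { intros x Hx. apply in_app_or in Hx. destruct Hx; auto. }
        apply in_app_or in Hy. destruct Hy as [Hy|Hy].
        + exfalso. assert (ev v (disjL L1) = true) by (apply ev_disjL; eauto). congruence.
        + apply ev_disjL. eauto. }
    intros v Hv Hk'. specialize (HB v Hv). simpl in HB. apply orb_true_iff in HB.
    destruct HB as [HB|HB].
    - apply negb_true_iff in HB. assert (ev v (conjL kappa) = true) by (apply ev_conjL; auto). congruence.
    - apply ev_disjL in HB. auto. }
  assert (Cths : all_classical ths).
  { apply Forall_forall. intros th Hth. destruct (Forall2_in_r _ _ _ _ Hths Hth) as [rho [_ [C _]]]. auto. }
  assert (Vths : forall th s q, In th ths -> pvar s th q -> Lf s q /\ Rt s q).
  { intros th s q Hth Hp. destruct (Forall2_in_r _ _ _ _ Hths Hth) as [rho [_ [_ [_ [_ H]]]]]. auto. }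
  assert (V1 : forall RG, resL G1 RG -> exists th, In th ths /\
              forall v, (forall x, In x RG -> ev v x = true) -> ev v th = true \/ exists y, In y L1 /\ ev v y = true).
  { intros RG HRG. destruct (Forall2_in_l _ _ _ _ Hths (proj2 (allres_iff _ _) HRG)) as [th [Hth [_ [E1 _]]]].
    exists th. split; auto. intros v Hv.
    destruct (ev v (disjL L1)) eqn:El.
    - right. apply ev_disjL; auto.
    - left. apply E1. simpl. rewrite El. simpl. rewrite andb_true_r. apply ev_conjL; auto. }
  destruct (classic (all_classical D2)) as [CD2|NCD2].
  - exists (disjL ths). assert (Cphi : classical (disjL ths) = true) by (apply cl_disjL; auto).
    split; auto. split; [apply classical_wf; auto|]. split; [|split].
    + apply completeness; auto. { constructor; auto. apply classical_wf; auto. }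
      intros RG HRG. exists (disjL ths :: L1). split.
      { constructor. rewrite res_classical; simpl; auto. apply resL_self; auto. }
      intros v Hv. destruct (V1 RG HRG) as [th [Hth Hv1]]. destruct (Hv1 v Hv) as [E|[y [Hy E]]].
      * exists (disjL ths). split; simpl; auto. apply ev_disjL; eauto.
      * exists y; simpl; auto.
    + apply completeness; auto. { constructor; auto. apply classical_wf; auto. }
      intros RG HRG. inversion HRG as [|a r b kappa Hr Hk]; subst.
      rewrite res_classical in Hr by auto. destruct Hr as [<-|[]].
      exists D2. split; [apply resL_self; auto|].
      intros v Hv. assert (E := Hv _ (or_introl eq_refl)). apply ev_disjL in E.
      destruct E as [th [Hth Eth]].
      destruct (Forall2_in_r _ _ _ _ Hths Hth) as [rho [Hrho Pr]].
      destruct (K rho th kappa Hrho Pr Hk) as [eps [Heps He]].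
      apply resL_classical in Heps; auto. subst eps. apply He; auto.
      intros x Hx. apply Hv. simpl; auto.
    + intros s p Hp. destruct (pvar_disjL _ _ _ Hp) as [th [Hth Hp']]. apply (Vths th); auto.
  - exists (idisjL ths).
    assert (Wphi : wf (idisjL ths) = true).
    { apply wf_idisjL. eapply Forall_impl; [|exact Cths]. intros; apply classical_wf; auto. }
    split; [|tauto]. split; auto. split; [|split].
    + apply completeness; auto.
      intros RG HRG. destruct (V1 RG HRG) as [th [Hth Hv1]].
      exists (th :: L1). split.
      { constructor. eapply res_idisjL_in; eauto. rewrite res_classical; simpl; auto.
        eapply Forall_forall in Cths; eauto. apply resL_self; auto. }
      intros v Hv. destruct (Hv1 v Hv) as [E|[y [Hy E]]].
      * exists th. simpl; auto.
      * exists y; simpl; auto.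
    + apply completeness; auto.
      intros RG HRG. inversion HRG as [|a r b kappa Hr Hk]; subst.
      destruct (res_idisjL _ _ Hr) as [->|[th [Hth Hr']]].
      * destruct (resL_ex D2) as [RD HRD]. exists RD. split; auto.
        intros v Hv. specialize (Hv Bot (or_introl eq_refl)). discriminate.
      * rewrite res_classical in Hr' by (eapply Forall_forall in Cths; eauto).
        destruct Hr' as [<-|[]].
        destruct (Forall2_in_r _ _ _ _ Hths Hth) as [rho [Hrho Pr]].
        destruct (K rho th kappa Hrho Pr Hk) as [eps [Heps He]].
        exists eps. split; auto. intros v Hv. apply He.
        -- apply Hv. simpl; auto.
        -- intros x Hx. apply Hv. simpl; auto.
    + intros s p Hp. destruct (pvar_idisjL _ _ _ Hp) as [th [Hth Hp']]. apply (Vths th); auto.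
Qed.
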